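(* In the setting of $I\ge 2$ matched pairs with fixed potential outcomes, observed outcomes $Y_{ij}=Y_{ij}(Z_{ij})$, and conditional on $\mathcal F,\mathcal Z$ the within-pair assignments $\widetilde Z_{i1}$ independent across pairs with $P(\widetilde Z_{i1}=1\mid\mathcal F,\mathcal Z)=p_{i1}\in(0,1)$ and $\widetilde Z_{i2}=1-\widetilde Z_{i1}$, consider the classic (generalized) Neyman estimator $$\widehat\lambda=\frac{\sum_{i=1}^{I}(\widetilde Z_{i1}-\widetilde Z_{i2})(Y_{i1}-Y_{i2})}{\sum_{i=1}^{I}(z_i^{**}-z_i^{*})}$$ and the variance estimator $$\overline{\overline V}=\frac{1}{\big(\sum_{i=1}^{I}(z_i^{**}-z_i^{*})\big)^2}\,\frac{I}{I-1}\sum_{i=1}^{I}\Big(\widetilde Z_{i1}\big((Y_{i1}-Y_{i2})-a\big)^2+\widetilde Z_{i2}\big((Y_{i2}-Y_{i1})-a\big)^2\Big),\qquad a=\widehat\lambda\,\frac{1}{I}\sum_{i=1}^{I}(z_i^{**}-z_i^{*}).$$ Then $\mathbb E[\overline{\overline V}\mid\mathcal F,\mathcal Z]\ge \mathrm{Var}[\widehat\lambda\mid\mathcal F,\mathcal Z]$.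
   Context: $Z_{ij}$ is the observed treatment dose of individual $j$ in matched pair $i$; $z_i^{*}=Z_{i1}\wedge Z_{i2}<z_i^{**}=Z_{i1}\vee Z_{i2}$; $\widetilde Z_{ij}=\mathbf 1\{Z_{ij}=z_i^{**}\}$. $\mathcal Z$ is the set of the $2^I$ dose assignments obtained by permuting the two doses within each pair, and $\mathcal F=\{(Y_{ij}(z_i^* ),Y_{ij}(z_i^{**}),\mathbf{x}_{ij})\}$ collects the potential outcomes under the two paired doses and the covariates. Expectation and variance are over the randomization distribution of the within-pair assignments only. *)

(* Defs.v *)
From HB Require Import structures.
From mathcomp Require Import all_boot all_order all_algebra.
Set Implicit Arguments. Unset Strict Implicit. Unset Printing Implicit Defensive.
Import Order.TTheory GRing.Theory Num.Theory.
Local Open Scope ring_scope.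

Section PairedDesign.
Variables (R : realFieldType) (I : nat).

(* A within-pair assignment: omega i = true  iff  Ztilde_{i1} = 1
   (individual 1 of pair i receives the larger dose z_i^** ).
   The set of all such omega is in bijection with the 2^I dose assignments of \mathcal Z. *)
Definition assign := {ffun 'I_I -> bool}.

Definition prob (p : 'I_I -> R) (w : assign) : R :=
  \prod_(i < I) (if w i then p i else 1 - p i).

Definition Ex (p : 'I_I -> R) (X : assign -> R) : R :=
  \sum_(w : assign) prob p w * X w.

Definition Var (p : 'I_I -> R) (X : assign -> R) : R :=
  Ex p (fun w => (X w - Ex p X) ^+ 2).

Variables (zlo zhi : 'I_I -> R) (Y : 'I_I -> 'I_2 -> R -> R).
(* zlo i = z_i^*, zhi i = z_i^**, Y i j z = potential outcome Y_{ij}(z);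
   individual index j : 'I_2, with ord0 = individual 1. *)

Definition Zdose (w : assign) (i : 'I_I) (j : 'I_2) : R :=
  if w i == (j == ord0) then zhi i else zlo i.

Definition Ztil (w : assign) (i : 'I_I) (j : 'I_2) : R :=
  if Zdose w i j == zhi i then 1 else 0.

Definition Yobs (w : assign) (i : 'I_I) (j : 'I_2) : R := Y i j (Zdose w i j).

Definition dsum : R := \sum_(i < I) (zhi i - zlo i).

Definition lambda_hat (w : assign) : R :=
  (\sum_(i < I) (Ztil w i ord0 - Ztil w i ord_max) * (Yobs w i ord0 - Yobs w i ord_max))
  / dsum.

Definition Vbb (w : assign) : R :=
  let a := lambda_hat w * (I%:R^-1 * dsum) in
  (dsum ^+ 2)^-1 * (I%:R / (I - 1)%:R) *
  \sum_(i < I) (Ztil w i ord0 * ((Yobs w i ord0 - Yobs w i ord_max) - a) ^+ 2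
              + Ztil w i ord_max * ((Yobs w i ord_max - Yobs w i ord0) - a) ^+ 2).

End PairedDesign.

(* Main.v *)
Require Import Defs.
From HB Require Import structures.
From mathcomp Require Import all_boot all_order all_algebra.
From mathcomp Require Import ring lra.
Import Order.TTheory GRing.Theory Num.Theory.
Set Implicit Arguments. Unset Strict Implicit.
Local Open Scope ring_scope.

Section Aux.
Variables (R : realFieldType) (I : nat) (p : 'I_I -> R).

Definition qq (i : 'I_I) (b : bool) : R := if b then p i else 1 - p i.
Definition ee (i : 'I_I) (h : bool -> R) : R := qq i true * h true + qq i false * h false.

Lemma Ex_ext (X X' : assign I -> R) : (forall w, X w = X' w) -> Ex p X = Ex p X'.
Proof. by move=> h; apply: eq_bigr => w _; rewrite h. Qed.

Lemma Ex_prod (G : 'I_I -> bool -> R) :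
  Ex p (fun w => \prod_i G i (w i)) = \prod_i ee i (G i).
Proof.
rewrite /Ex /prob.
transitivity (\sum_(w : assign I) \prod_i (qq i (w i) * G i (w i))).
  by apply: eq_bigr => w _; rewrite big_split.
rewrite -(bigA_distr_bigA (fun i b => qq i b * G i b)).
by apply: eq_bigr => i _; rewrite big_bool.
Qed.

Lemma qq1 i : ee i (fun _ => 1) = 1.
Proof. by rewrite /ee /qq !mulr1 addrC subrK. Qed.

Lemma Ex1 (i : 'I_I) (f : bool -> R) : Ex p (fun w => f (w i)) = ee i f.
Proof.
rewrite (@Ex_ext _ (fun w => \prod_k (if k == i then f else fun _ => 1) (w k))).
  rewrite (Ex_prod (fun k => if k == i then f else fun _ => 1)) (bigD1 i) //= ?eqxx.
  rewrite big1 ?mulr1 // => k /negbTE ->; exact: qq1.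
move=> w; rewrite [RHS](bigD1 i) //= eqxx big1 ?mulr1 //.
by move=> k /negbTE ->.
Qed.

Lemma Ex2 (i j : 'I_I) (f g : bool -> R) : i != j ->
  Ex p (fun w => f (w i) * g (w j)) = ee i f * ee j g.
Proof.
move=> nij.
have nji : (j == i) = false by rewrite eq_sym (negbTE nij).
rewrite (@Ex_ext _ (fun w => \prod_k
   (if k == i then f else if k == j then g else fun _ => 1) (w k))).
  rewrite (Ex_prod (fun k => if k == i then f else if k == j then g else fun _ => 1)) (bigD1 i) //= eqxx (bigD1 j) /=; last by rewrite eq_sym.
  rewrite nji /= eqxx big1 ?mulr1 //.
  by move=> k /andP[/negbTE -> /negbTE ->]; exact: qq1.
move=> w; rewrite [RHS](bigD1 i) //= eqxx (bigD1 j) /=; last by rewrite eq_sym.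
rewrite nji /= eqxx big1 ?mulr1 //.
by move=> k /andP[/negbTE -> /negbTE ->].
Qed.

Lemma ExD X X' : Ex p (fun w => X w + X' w) = Ex p X + Ex p X'.
Proof. by rewrite /Ex -big_split; apply: eq_bigr => w _; rewrite mulrDr. Qed.

Lemma ExZ c X : Ex p (fun w => c * X w) = c * Ex p X.
Proof. by rewrite /Ex mulr_sumr; apply: eq_bigr => w _; rewrite mulrCA. Qed.

Lemma ExS (F : 'I_I -> assign I -> R) :
  Ex p (fun w => \sum_i F i w) = \sum_i Ex p (F i).
Proof.
rewrite /Ex; under eq_bigr do rewrite mulr_sumr; exact: exchange_big.
Qed.

Lemma ExC c : Ex p (fun _ => c) = c.
Proof.
rewrite (@Ex_ext _ (fun w => c * \prod_k (fun _ : 'I_I => fun _ : bool => 1) k (w k))).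
  by rewrite ExZ (Ex_prod (fun _ _ => 1)) big1 ?mulr1 // => k _; exact: qq1.
by move=> w; rewrite big1 ?mulr1.
Qed.

Lemma VarE X : Var p X = Ex p (fun w => X w ^+ 2) - Ex p X ^+ 2.
Proof.
rewrite /Var (@Ex_ext _ (fun w => X w ^+ 2 + ((- (2 * Ex p X)) * X w + Ex p X ^+ 2))).
  by rewrite ExD ExD ExZ ExC; ring.
by move=> w; ring.
Qed.

Lemma sq_dev (u : 'I_I -> R) : I%:R != 0 :> R ->
  \sum_i (u i - (\sum_j u j) / I%:R) ^+ 2 =
  \sum_i u i ^+ 2 - (\sum_j u j) ^+ 2 / I%:R.
Proof.
move=> nI; set s := \sum_j u j.
rewrite (eq_bigr (fun i => u i ^+ 2 + ((- (2 * s / I%:R)) * u i + (s / I%:R) ^+ 2)));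
  last by move=> i _; ring.
rewrite big_split big_split /= -mulr_sumr sumr_const card_ord -/s.
rewrite -mulr_natr; field; done.
Qed.

End Aux.

Section Main.
Variables (R : realFieldType) (I : nat) (zlo zhi : 'I_I -> R)
  (Y : 'I_I -> 'I_2 -> R -> R).
Hypothesis hz : forall i, zlo i < zhi i.

Definition tt (i : 'I_I) (b : bool) : R :=
  if b then Y i ord0 (zhi i) - Y i ord_max (zlo i)
  else Y i ord_max (zhi i) - Y i ord0 (zlo i).

Lemma neq_z i : (zlo i == zhi i) = false.
Proof. by rewrite lt_eqF. Qed.

Lemma term_eq w i :
  (Ztil zlo zhi w i ord0 - Ztil zlo zhi w i ord_max) *
  (Yobs zlo zhi Y w i ord0 - Yobs zlo zhi Y w i ord_max) = tt i (w i).
Proof.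
rewrite /Ztil /Yobs /Zdose /tt; case: (w i) => /=; rewrite ?eqxx ?neq_z /=.
  by rewrite subr0 mul1r.
by rewrite sub0r mulN1r opprB.
Qed.

Lemma vterm_eq w i a :
  Ztil zlo zhi w i ord0 * ((Yobs zlo zhi Y w i ord0 - Yobs zlo zhi Y w i ord_max) - a) ^+ 2
  + Ztil zlo zhi w i ord_max * ((Yobs zlo zhi Y w i ord_max - Yobs zlo zhi Y w i ord0) - a) ^+ 2
  = (tt i (w i) - a) ^+ 2.
Proof.
rewrite /Ztil /Yobs /Zdose /tt; case: (w i) => /=; rewrite ?eqxx ?neq_z /=.
  by rewrite mul1r mul0r addr0.
by rewrite mul1r mul0r add0r.
Qed.

End Main.

Theorem lemma1 (R : realFieldType) (I : nat) (hI : (2 <= I)%N)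
    (zlo zhi : 'I_I -> R) (hz : forall i, zlo i < zhi i)
    (Y : 'I_I -> 'I_2 -> R -> R)
    (p : 'I_I -> R) (hp : forall i, 0 < p i < 1) :
  Var p (lambda_hat zlo zhi Y) <= Ex p (Vbb zlo zhi Y).
Proof.
set S := dsum zlo zhi.
have S0 : S != 0.
  have i0 : 'I_I by exists 0%N; apply: leq_trans hI.
  rewrite /S /dsum (bigD1 i0) //=.
  have h1 := hz i0.
  have h2 : 0 <= \sum_(i < I | i != i0) (zhi i - zlo i).
    by apply: sumr_ge0 => i _; rewrite subr_ge0 ltW.
  apply: lt0r_neq0 => //. rewrite ltr_pwDl //. by rewrite subr_gt0.
set n : R := I%:R.
have n0 : n != 0 by rewrite /n pnatr_eq0 -lt0n; apply: leq_trans hI.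
have n1 : n - 1 != 0.
  rewrite /n -(natrB _ (leq_trans (isT : (1 <= 2)%N) hI)) pnatr_eq0 subn_eq0 -ltnNge.
  exact: hI.
set X := fun w : assign I => \sum_i tt zlo zhi Y i (w i).
set m := fun i => ee p i (tt zlo zhi Y i).
set s2 := fun i => ee p i (fun b => tt zlo zhi Y i b ^+ 2).
have lamE w : lambda_hat zlo zhi Y w = X w / S.
  rewrite /lambda_hat -/S /X; congr (_ / _); apply: eq_bigr => i _; exact: (@term_eq _ _ zlo zhi Y hz).
set c0 := (S ^+ 2)^-1 * (n / (I - 1)%:R).
have VbbE w : Vbb zlo zhi Y w =
    c0 * (\sum_i tt zlo zhi Y i (w i) ^+ 2 + (- n^-1) * X w ^+ 2).
  rewrite /Vbb /= -/S -/n -/c0 lamE; congr (_ * _).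
  rewrite (eq_bigr (fun i => (tt zlo zhi Y i (w i) - X w / n) ^+ 2)); last first.
    move=> i _; rewrite (@vterm_eq _ _ zlo zhi Y hz); have -> : X w / S * (n^-1 * S) = X w / n by field; rewrite ?S0 ?n0.
    by [].
  have := sq_dev (fun i => tt zlo zhi Y i (w i)) n0; rewrite /= -/n /X /= => ->; ring.
have EX : Ex p X = \sum_i m i.
  by rewrite /X ExS; apply: eq_bigr => i _; rewrite Ex1.
have EQ : Ex p (fun w => \sum_i tt zlo zhi Y i (w i) ^+ 2) = \sum_i s2 i.
  by rewrite ExS; apply: eq_bigr => i _; rewrite (Ex1 p i (fun b => tt zlo zhi Y i b ^+ 2)).
have EX2 : Ex p (fun w => X w ^+ 2) = (\sum_i m i) ^+ 2 + \sum_i (s2 i - m i ^+ 2).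
  rewrite (@Ex_ext _ _ _ _ (fun w => \sum_i \sum_j tt zlo zhi Y i (w i) * tt zlo zhi Y j (w j))); last first.
    move=> w; rewrite expr2 /X mulr_suml; apply: eq_bigr => i _; exact: mulr_sumr.
  rewrite ExS expr2 mulr_suml -big_split; apply: eq_bigr => i _ /=.
  rewrite ExS mulr_sumr (bigD1 i) //= [in RHS](bigD1 i) //=.
  rewrite (Ex1 p i (fun b => tt zlo zhi Y i b * tt zlo zhi Y i b)).
  rewrite (eq_bigr (fun j => m i * m j)); last first.
    move=> j nji; rewrite (Ex2 p (fun b => tt zlo zhi Y i b) (fun b => tt zlo zhi Y j b)) //.
    by rewrite eq_sym.
  rewrite /s2 /m /ee !expr2; ring.
set M := \sum_i m i.
set V := \sum_i (s2 i - m i ^+ 2).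
set M2 := \sum_i m i ^+ 2.
have EQ' : \sum_i s2 i = V + M2 by rewrite /V /M2 sumrB subrK.
have K : 0 <= M2 - M ^+ 2 / n.
  rewrite /M2 /M -(sq_dev m n0); apply: sumr_ge0 => i _; exact: sqr_ge0.
have n1' : 1 < n by rewrite /n ltr1n.
have LV : Var p (lambda_hat zlo zhi Y) = (S^-1) ^+ 2 * (M ^+ 2 + V) - (S^-1 * M) ^+ 2.
  rewrite VarE.
  rewrite (@Ex_ext _ _ p _ (fun w => (S^-1) ^+ 2 * X w ^+ 2)); last first.
    by move=> w; rewrite lamE; ring.
  rewrite (@Ex_ext _ _ p (lambda_hat zlo zhi Y) (fun w => S^-1 * X w)); last first.
    by move=> w; rewrite lamE mulrC.
  by rewrite !ExZ EX2 EX.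
have RV : Ex p (Vbb zlo zhi Y) = c0 * (V + M2 + (- n^-1) * (M ^+ 2 + V)).
  by rewrite (@Ex_ext _ _ p (Vbb zlo zhi Y) _ VbbE) ExZ ExD ExZ EQ EX2 EQ'.
rewrite LV RV /c0 natrB; last exact: leq_trans hI.
rewrite -/n -subr_ge0.
have -> : (S ^+ 2)^-1 * (n / (n - 1%:R)) * (V + M2 + - n^-1 * (M ^+ 2 + V)) -
   ((S^-1) ^+ 2 * (M ^+ 2 + V) - (S^-1 * M) ^+ 2) =
   (S ^+ 2)^-1 * (n / (n - 1)) * (M2 - M ^+ 2 / n).
  by field; rewrite S0 n0 n1.
apply: mulr_ge0 => //; apply: mulr_ge0.
  by rewrite invr_ge0 sqr_ge0.
apply: divr_ge0; lra.
Qed.
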